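(* Let $K$ be a field of characteristic zero. Suppose that for all $f,g\in K[X]$ and $x_0,y_0\in K$ the following holds: if $\{(f^n(x_0),g^n(y_0)):n\in\mathbb{N}\}$ has infinite intersection with the diagonal line $X=Y$ in $\mathbb{A}^2$, then the diagonal is periodic under the action of $(f,g)$. Then for all $f,g\in K[X]$, $x_0,y_0\in K$ and every line $L$ in $\mathbb{A}^2$ defined over $K$: if $\{(f^n(x_0),g^n(y_0)):n\in\mathbb{N}\}$ has infinite intersection with $L$, then $L$ is periodic under the action of $(f,g)$.
   Context: $f^n$ denotes the $n$-th iterate of $f$ under composition; $\mathbb{N}$ is the set of positive integers. The pair $(f,g)$ acts on $\mathbb{A}^2$ by $(x,y)\mapsto(f(x),g(y))$; a line $L$ is periodic under this action if there is $k\in\mathbb{N}$ such that $(x,y)\mapsto(f^k(x),g^k(y))$ maps $L$ into $L$. *)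

(* Defs.v *)
From HB Require Import structures.
From mathcomp Require Import all_boot all_order all_algebra.
Set Implicit Arguments. Unset Strict Implicit. Unset Printing Implicit Defensive.
Import GRing.Theory.
Local Open Scope ring_scope.

Definition piter (K : fieldType) (f : {poly K}) (n : nat) (x : K) : K :=
  iter n (fun z => f.[z]) x.

(* The line L(a,b,c) = {(x,y) | a x + b y = c}; it is a genuine line
   when (a,b) != (0,0). *)
Definition on_line (K : fieldType) (a b c : K) (p : K * K) : Prop :=
  a * p.1 + b * p.2 = c.

(* Points of the orbit {(f^n x0, g^n y0) : n in N}, N = positive integers. *)
Definition in_orbit (K : fieldType) (f g : {poly K}) (x0 y0 : K) (p : K * K) : Prop :=
  exists n : nat, (0 < n)%N /\ p = (piter f n x0, piter g n y0).

Definition infinite_inter (K : fieldType) (f g : {poly K}) (x0 y0 : K) (a b c : K) : Prop :=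
  ~ exists s : seq (K * K),
      forall p, in_orbit f g x0 y0 p -> on_line a b c p -> p \in s.

Definition periodic_line (K : fieldType) (f g : {poly K}) (a b c : K) : Prop :=
  exists k : nat, (0 < k)%N /\
    forall x y : K, on_line a b c (x, y) ->
      on_line a b c (piter f k x, piter g k y).

(* Main.v *)
Require Import Defs.
From HB Require Import structures.
From mathcomp Require Import all_boot all_order all_algebra.
From mathcomp Require Import ring.
From Stdlib Require Import Classical.
Import GRing.Theory.
Local Open Scope ring_scope.

Lemma piterD (K : fieldType) (f : {poly K}) m n x :
  piter f (m + n) x = piter f m (piter f n x).
Proof. by rewrite /piter iterD. Qed.

Lemma hit_lemma (K : fieldType) (f : {poly K}) (x0 d : K) :
  (exists k, (0 < k)%N /\ piter f k d = d) \/
  (exists s : seq nat, forall m, (0 < m)%N -> piter f m x0 = d -> m \in s).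
Proof.
case: (classic (exists k, (0 < k)%N /\ piter f k d = d)) => [H|Hn]; first by left.
right.
case: (classic (exists n, (0 < n)%N /\ piter f n x0 = d)) => [[n [n0 Hn0]]|Hno]; last first.
  by exists [::] => m m0 Hm; exfalso; apply: Hno; exists m.
exists [:: n] => m m0 Hm; rewrite inE; apply/eqP.
case: (ltngtP m n) => // Hmn; exfalso; apply: Hn.
- exists (n - m)%N; split; first by rewrite subn_gt0.
  by rewrite -Hm -piterD subnK ?Hn0 // ltnW.
- exists (m - n)%N; split; first by rewrite subn_gt0.
  by rewrite -Hn0 -piterD subnK ?Hm // ltnW.
Qed.

Theorem lemma5p1 (K : fieldType) (charK0 : [pchar K] =i pred0) :
  (forall (f g : {poly K}) (x0 y0 : K),
      infinite_inter f g x0 y0 1 (-1) 0 -> periodic_line f g 1 (-1) 0) ->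
  forall (f g : {poly K}) (x0 y0 : K) (a b c : K),
    (a, b) != (0, 0) ->
    infinite_inter f g x0 y0 a b c -> periodic_line f g a b c.
Proof.
move=> H f g x0 y0 a b c nz Hinf.
have [b0|bn0] := eqVneq b 0.
  have an0 : a != 0 by apply: contra nz; rewrite b0 => /eqP ->.
  case: (@hit_lemma _ f x0 (c / a)) => [[k [k0 Hk]]|[s Hs]].
    exists k; split => // x y; rewrite /on_line /= b0 !mul0r !addr0 => Hx.
    have -> : x = c / a by rewrite -Hx; field.
    by rewrite Hk; field.
  exfalso; apply: Hinf; exists (map (fun m => (c / a, piter g m y0)) s).
  move=> p [n [n0 ->]]; rewrite /on_line /= b0 mul0r addr0 => Hx.
  apply/mapP; exists n; last by congr pair; rewrite -Hx; field.
  by apply: Hs => //; rewrite -Hx; field.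
have [a0|an0] := eqVneq a 0.
  case: (@hit_lemma _ g y0 (c / b)) => [[k [k0 Hk]]|[s Hs]].
    exists k; split => // x y; rewrite /on_line /= a0 !mul0r !add0r => Hx.
    have -> : y = c / b by rewrite -Hx; field.
    by rewrite Hk; field.
  exfalso; apply: Hinf; exists (map (fun m => (piter f m x0, c / b)) s).
  move=> p [n [n0 ->]]; rewrite /on_line /= a0 mul0r add0r => Hx.
  apply/mapP; exists n; last by congr pair; rewrite -Hx; field.
  by apply: Hs => //; rewrite -Hx; field.
set al := - a / b. set be := c / b.
have aln0 : al != 0 by rewrite /al mulf_neq0 ?oppr_eq0 ?invr_eq0.
pose h x := al * x + be.
pose hi y := (y - be) / al.
have hiK : forall x, hi (h x) = x by move=> x; rewrite /hi /h addrK mulrC mulKf.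
have hK : forall y, h (hi y) = y by move=> y; rewrite /hi /h mulrC divfK // subrK.
have onl : forall x y, a * x + b * y = c <-> y = h x.
  move=> x y; rewrite /h /al /be; split => [<-|->]; first by field.
  by field.
pose hP : {poly K} := al *: 'X + be%:P.
pose hiP : {poly K} := (al^-1) *: ('X - be%:P).
pose gt := hiP \Po (g \Po hP).
have gtE : forall x, gt.[x] = hi (g.[h x]).
  move=> x; rewrite /gt !horner_comp /hP /hiP !hornerE /hi /h.
  by rewrite mulrC.
have gtn : forall n y, piter gt n (hi y) = hi (piter g n y).
  elim=> [|n IH] y //=; rewrite /piter /= -/(piter gt n (hi y)) IH gtE.
  by rewrite hK.
have [k [k0 Hk]] : periodic_line f gt 1 (-1) 0.
  apply: (H _ _ x0 (hi y0)) => -[s Hs]; apply: Hinf.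
  exists (map (fun q => (q.1, h q.2)) s) => p [n [n0 ->]] Hon.
  apply/mapP; exists (piter f n x0, piter gt n (hi y0)); last first.
    by rewrite /= gtn hK.
  apply: Hs; first by exists n.
  rewrite /on_line /= gtn; move/onl: Hon => /= ->; rewrite hiK.
  by rewrite mul1r mulN1r subrr.
exists k; split => // x y; rewrite /on_line /= => /onl ->; apply/onl.
have Hd : on_line 1 (-1) 0 (x, x) by rewrite /on_line /= mul1r mulN1r subrr.
move: (Hk x x Hd); rewrite /on_line /= mul1r mulN1r => /eqP; rewrite subr_eq0 => /eqP ->.
have : piter gt k (hi (h x)) = hi (piter g k (h x)) by apply: gtn.
by rewrite hiK => ->; rewrite hK.
Qed.
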